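(* In the setting below, suppose $\eta \geq \eta_0$ and $t < \tau$. Then there is an integer $s$ with $t \le s \leq t + 1 + 4n/\gamma + 96/\gamma^2$ such that either $s = \tau$ or an oscillation happens at iteration $s$.
   Context: Dimension $d=2$. Data $x_1,\dots,x_n\in\mathbb{R}^2$ with $\|x_i\|\le 1$, linearly separable (some $w$ has $\langle w,x_i\rangle>0$ for all $i$). $F(w) = \frac{1}{n}\sum_{i=1}^n \log(1+\exp(-\langle w, x_i\rangle))$. Maximum margin $\gamma = \max_{\|w\|=1}\min_i \langle w, x_i\rangle$ with maximizer the unit vector $w_*$; $v_*$ is a fixed unit vector orthogonal to $w_*$. Gradient descent: $w_0=0$, $w_{t+1} = w_t - \eta\nabla F(w_t)$ with constant $\eta>0$. $\hat{w}_t = \langle w_t, w_*\rangle$, $\tilde{w}_t = \langle w_t, v_*\rangle$. $\tau = \min\{t\ge 0: F(w_t)\le 1/(8\eta)\}$. $\eta_0 = \max(n, \frac{32}{\gamma^2}\log\frac{256}{\gamma^2})$. $\lambda = \frac{1}{\gamma}\log\frac{1}{\exp(1/(8\eta))-1}$. An oscillation happens at iteration $t\ge 0$ if all of: (1) $\hat{w}_t \geq \lambda$; (2) $F(w_t) > 1/(8\eta)$ and $F(w_{t+1}) > 1/(8\eta)$; (3) $\tilde{w}_{t+1}\tilde{w}_t < 0$. *)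

(* Defs.v *)
From Stdlib Require Import Reals.
Open Scope R_scope.

Definition vec2 := (R * R)%type.

Definition dot (u v : vec2) : R := fst u * fst v + snd u * snd v.
Definition vnorm (u : vec2) : R := sqrt (dot u u).
Definition vadd (u v : vec2) : vec2 := (fst u + fst v, snd u + snd v).
Definition vscale (a : R) (u : vec2) : vec2 := (a * fst u, a * snd u).

Fixpoint rsum (f : nat -> R) (n : nat) : R :=
  match n with
  | O => 0
  | S k => rsum f k + f k
  end.

Fixpoint vsum (f : nat -> vec2) (n : nat) : vec2 :=
  match n with
  | O => (0, 0)
  | S k => vadd (vsum f k) (f k)
  end.

Definition F (n : nat) (x : nat -> vec2) (w : vec2) : R :=
  / INR n * rsum (fun i => ln (1 + exp (- dot w (x i)))) n.

Definition gradF (n : nat) (x : nat -> vec2) (w : vec2) : vec2 :=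
  vscale (- / INR n)
    (vsum (fun i => vscale (exp (- dot w (x i)) / (1 + exp (- dot w (x i)))) (x i)) n).

Fixpoint gd (n : nat) (x : nat -> vec2) (eta : R) (t : nat) : vec2 :=
  match t with
  | O => (0, 0)
  | S k => let w := gd n x eta k in vadd w (vscale (- eta) (gradF n x w))
  end.

Definition max_margin (n : nat) (x : nat -> vec2) (gamma : R) (wstar : vec2) : Prop :=
  vnorm wstar = 1 /\
  (forall i, (i < n)%nat -> gamma <= dot wstar (x i)) /\
  (exists i, (i < n)%nat /\ dot wstar (x i) = gamma) /\
  (forall w, vnorm w = 1 -> exists i, (i < n)%nat /\ dot w (x i) <= gamma).

Definition is_tau (n : nat) (x : nat -> vec2) (eta : R) (s : nat) : Prop :=
  F n x (gd n x eta s) <= 1 / (8 * eta) /\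
  (forall k, (k < s)%nat -> F n x (gd n x eta k) > 1 / (8 * eta)).

(* t < tau (tau possibly infinite, i.e. the set may be empty) *)
Definition lt_tau (n : nat) (x : nat -> vec2) (eta : R) (t : nat) : Prop :=
  forall k, (k <= t)%nat -> F n x (gd n x eta k) > 1 / (8 * eta).

Definition lambda (eta gamma : R) : R :=
  / gamma * ln (1 / (exp (1 / (8 * eta)) - 1)).

Definition eta0 (n : nat) (gamma : R) : R :=
  Rmax (INR n) (32 / gamma ^ 2 * ln (256 / gamma ^ 2)).

Definition oscillation (n : nat) (x : nat -> vec2) (eta gamma : R)
    (wstar vstar : vec2) (t : nat) : Prop :=
  dot (gd n x eta t) wstar >= lambda eta gamma /\
  F n x (gd n x eta t) > 1 / (8 * eta) /\
  F n x (gd n x eta (S t)) > 1 / (8 * eta) /\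
  dot (gd n x eta (S t)) vstar * dot (gd n x eta t) vstar < 0.

(* Main.v *)
Require Import Defs.
From Stdlib Require Import Reals Lra Lia Psatz Classical ZArith.
Open Scope R_scope.


Lemma exp_le' : forall a b, a <= b -> exp a <= exp b.
Proof. intros a b H. destruct (Req_dec a b) as [->|Hn]. lra. left. apply exp_increasing. lra. Qed.

Lemma ln_le' : forall a b, 0 < a -> a <= b -> ln a <= ln b.
Proof. intros a b Ha H. destruct (Req_dec a b) as [->|Hn]. lra. left. apply ln_increasing; lra. Qed.

Lemma ln_le_self : forall a, 0 < a -> ln a <= a.
Proof. intros a Ha. rewrite <- (exp_ln a) at 2 by lra.
  pose proof (exp_ineq1_le (ln a)). lra. Qed.

Lemma ln1p_le : forall u, 0 <= u -> ln (1 + u) <= u.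
Proof. intros u Hu. rewrite <- (ln_exp u) at 2. apply ln_le'. lra.
  pose proof (exp_ineq1_le u). lra. Qed.

Lemma xexp_le : forall x, x * exp (- x) <= exp (-1).
Proof. intros x. pose proof (exp_ineq1_le (x - 1)).
  replace (exp (-1)) with (exp (x-1) * exp (-x)).
  2:{ rewrite <- exp_plus. f_equal. ring. }
  pose proof (exp_pos (-x)). nra. Qed.

Lemma exp1_lb : exp 1 >= 43046721/16777216.
Proof.
  pose proof (exp_ineq1_le (1/8)) as H.
  replace 1 with (8 * (1/8)) at 1 by field.
  assert (E: forall k:nat, exp (INR k * (1/8)) = (exp (1/8)) ^ k).
  { induction k. simpl. rewrite Rmult_0_l. apply exp_0.
    rewrite S_INR. replace ((INR k + 1) * (1/8)) with (INR k * (1/8) + 1/8) by ring.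
    rewrite exp_plus, IHk. simpl. ring. }
  replace 8 with (INR 8) at 1 by (simpl; ring). rewrite E.
  assert (1 + 1/8 <= exp (1/8)) by lra.
  assert (Hp: (1+1/8)^8 <= exp (1/8) ^ 8).
  { apply pow_incr. lra. }
  lra.
Qed.

Lemma expm1_lb : exp (-1) <= 39/100.
Proof. replace (exp (-1)) with (/ exp 1) by (rewrite <- exp_Ropp; f_equal; ring). pose proof exp1_lb. pose proof (exp_pos 1).
  apply Rmult_le_reg_l with (exp 1). lra. rewrite Rinv_r by lra. lra. Qed.

Lemma expm3_lb : exp (-3) <= 6/100.
Proof. replace (-3) with (-1 + -1 + -1) by ring. rewrite !exp_plus.
  pose proof expm1_lb. pose proof (exp_pos (-1)).
  assert (exp (-1) * exp (-1) <= 39/100 * (39/100)) by nra. nra. Qed.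

Lemma exp5_le : exp 5 <= 256.
Proof. replace 5 with (1+1+1+1+1) by ring. rewrite !exp_plus.
  pose proof exp_le_3. pose proof (exp_pos 1).
  assert (exp 1 * exp 1 <= 9) by nra.
  assert (exp 1 * exp 1 * exp 1 <= 27) by nra.
  assert (exp 1 * exp 1 * exp 1 * exp 1 <= 81) by nra.
  nra. Qed.


Lemma rsum_ext : forall f g m, (forall i, (i < m)%nat -> f i = g i) -> rsum f m = rsum g m.
Proof. intros f g m H. induction m; simpl. auto. rewrite IHm by (intros; apply H; lia). rewrite H by lia. auto. Qed.

Lemma rsum_le : forall f g m, (forall i, (i < m)%nat -> f i <= g i) -> rsum f m <= rsum g m.
Proof. intros f g m H. induction m; simpl. lra.
  assert (rsum f m <= rsum g m) by (apply IHm; intros; apply H; lia).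
  assert (f m <= g m) by (apply H; lia). lra. Qed.

Lemma rsum_scal : forall c f m, rsum (fun i => c * f i) m = c * rsum f m.
Proof. intros c f m. induction m; simpl. ring. rewrite IHm. ring. Qed.

Lemma rsum_plus : forall f g m, rsum (fun i => f i + g i) m = rsum f m + rsum g m.
Proof. intros f g m. induction m; simpl. ring. rewrite IHm. ring. Qed.

Lemma rsum_minus : forall f g m, rsum (fun i => f i - g i) m = rsum f m - rsum g m.
Proof. intros f g m. induction m; simpl. ring. rewrite IHm. ring. Qed.

Lemma rsum_const : forall c m, rsum (fun _ => c) m = INR m * c.
Proof. intros c m. induction m; simpl rsum. simpl. ring. rewrite IHm, S_INR. ring. Qed.

Lemma rsum_nonneg : forall f m, (forall i, (i < m)%nat -> 0 <= f i) -> 0 <= rsum f m.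
Proof. intros f m H. induction m; simpl. lra.
  assert (0 <= rsum f m) by (apply IHm; intros; apply H; lia).
  assert (0 <= f m) by (apply H; lia). lra. Qed.

Lemma rsum_ge_term : forall f m k, (forall i, (i < m)%nat -> 0 <= f i) -> (k < m)%nat -> f k <= rsum f m.
Proof. intros f m k H Hk. induction m. lia. simpl.
  destruct (Nat.eq_dec k m) as [->|Hne].
  - assert (0 <= rsum f m) by (apply rsum_nonneg; intros; apply H; lia). lra.
  - assert (f k <= rsum f m) by (apply IHm; [intros; apply H; lia | lia]).
    assert (0 <= f m) by (apply H; lia). lra. Qed.

Lemma rsum_le_const : forall f c m, (forall i, (i < m)%nat -> f i <= c) -> rsum f m <= INR m * c.
Proof. intros. rewrite <- rsum_const. apply rsum_le. auto. Qed.

Lemma rsum_ge_const : forall f c m, (forall i, (i < m)%nat -> c <= f i) -> INR m * c <= rsum f m.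
Proof. intros. rewrite <- rsum_const. apply rsum_le. auto. Qed.

Lemma dot_comm : forall u v, dot u v = dot v u.
Proof. intros [a b] [c d]; unfold dot; simpl; ring. Qed.
Lemma dot_vadd : forall u v y, dot (vadd u v) y = dot u y + dot v y.
Proof. intros [a b] [c d] [e f]; unfold dot, vadd; simpl; ring. Qed.
Lemma dot_vscale : forall c u y, dot (vscale c u) y = c * dot u y.
Proof. intros c [a b] [e f]; unfold dot, vscale; simpl; ring. Qed.
Lemma dot_vsum : forall f m y, dot (vsum f m) y = rsum (fun i => dot (f i) y) m.
Proof. intros f m y. induction m; simpl. unfold dot; simpl; ring.
  rewrite dot_vadd, IHm. auto. Qed.

Definition sg (z : R) : R := exp (- z) / (1 + exp (- z)).
Definition lz (z : R) : R := ln (1 + exp (- z)).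

Lemma gd_S_dot : forall n x eta k y,
  dot (gd n x eta (S k)) y = dot (gd n x eta k) y +
    eta / INR n * rsum (fun i => sg (dot (gd n x eta k) (x i)) * dot (x i) y) n.
Proof. intros. simpl. rewrite dot_vadd, dot_vscale. unfold gradF.
  rewrite dot_vscale, dot_vsum.
  erewrite rsum_ext with (g := fun i => sg (dot (gd n x eta k) (x i)) * dot (x i) y).
  2:{ intros i _. rewrite dot_vscale. unfold sg. reflexivity. }
  unfold Rdiv. ring. Qed.

Lemma F_eq : forall n x w, F n x w = / INR n * rsum (fun i => lz (dot w (x i))) n.
Proof. intros. reflexivity. Qed.

Lemma vnorm1 : forall u, vnorm u = 1 -> dot u u = 1.
Proof. intros u H. unfold vnorm in H.
  assert (0 <= dot u u) by (destruct u; unfold dot; simpl; nra).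
  rewrite <- (sqrt_sqrt (dot u u)) by auto. rewrite H. ring. Qed.

Lemma vnorm_le1 : forall u, vnorm u <= 1 -> dot u u <= 1.
Proof. intros u H. unfold vnorm in H.
  assert (0 <= dot u u) by (destruct u; unfold dot; simpl; nra).
  rewrite <- (sqrt_sqrt (dot u u)) by auto. pose proof (sqrt_pos (dot u u)). nra. Qed.

Lemma decomp : forall ws vs, vnorm ws = 1 -> vnorm vs = 1 -> dot vs ws = 0 ->
  forall u y, dot u y = dot u ws * dot y ws + dot u vs * dot y vs.
Proof. intros [p q] [r s] H1 H2 H3 [u1 u2] [y1 y2].
  apply vnorm1 in H1; apply vnorm1 in H2. unfold dot in *; simpl in *.
  set (k := p*s - q*r).
  assert (Er : r = - q * k).
  { assert (r + q*k = p*(r*p+s*q) + r*(1-(p*p+q*q))) by (unfold k; ring). rewrite H3, H1 in H. lra. }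
  assert (Es : s = p * k).
  { assert (s - p*k = q*(r*p+s*q) + s*(1-(p*p+q*q))) by (unfold k; ring). rewrite H3, H1 in H. lra. }
  assert (Hk : k*k = 1).
  { rewrite Er, Es in H2. replace (- q * k * (- q * k) + p * k * (p * k)) with (k*k*(p*p+q*q)) in H2 by ring.
    rewrite H1 in H2. lra. }
  rewrite Er, Es.
  replace ((u1 * p + u2 * q) * (y1 * p + y2 * q) + (u1 * (- q * k) + u2 * (p * k)) * (y1 * (- q * k) + y2 * (p * k)))
   with ((u1*y1+u2*y2)*(p*p+q*q) + (u1*y1*q*q+u2*y2*p*p - (u1*y2+u2*y1)*p*q)*(k*k - 1)) by ring.
  rewrite H1, Hk. ring. Qed.


Lemma le_div : forall a b d, 0 < d -> a * d <= b -> a <= b / d.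
Proof. intros. apply Rmult_le_reg_r with d. auto. unfold Rdiv. rewrite Rmult_assoc, Rinv_l by lra. lra. Qed.
Lemma div_le : forall a b d, 0 < d -> b <= a * d -> b / d <= a.
Proof. intros. apply Rmult_le_reg_r with d. auto. unfold Rdiv. rewrite Rmult_assoc, Rinv_l by lra. lra. Qed.

Lemma sg_alt : forall z, sg z = exp (-z) / (1 + exp (-z)).
Proof. reflexivity. Qed.

Lemma sg_pos : forall z, 0 < sg z.
Proof. intros. unfold sg. pose proof (exp_pos (-z)). apply Rdiv_lt_0_compat; lra. Qed.

Lemma sg_le_exp : forall z, sg z <= exp (-z).
Proof. intros. unfold sg. pose proof (exp_pos (-z)).
  apply div_le. lra. nra. Qed.

Lemma sg_le1 : forall z, sg z <= 1.
Proof. intros. unfold sg. pose proof (exp_pos (-z)).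
  apply div_le. lra. nra. Qed.

Lemma sg_ge_half : forall z, z <= 0 -> 1/2 <= sg z.
Proof. intros z Hz. unfold sg. pose proof (exp_pos (-z)).
  assert (1 <= exp (-z)) by (rewrite <- exp_0; apply exp_le'; lra).
  apply le_div. lra. nra. Qed.

Lemma sg_ge_exp_half : forall z, 0 <= z -> exp (-z) / 2 <= sg z.
Proof. intros z Hz. unfold sg. pose proof (exp_pos (-z)).
  assert (exp (-z) <= 1) by (rewrite <- exp_0; apply exp_le'; lra).
  unfold Rdiv at 1. apply le_div. lra. nra. Qed.

Lemma lz_le_exp : forall z, lz z <= exp (-z).
Proof. intros. unfold lz. apply ln1p_le. pose proof (exp_pos (-z)). lra. Qed.

Lemma lz_nonneg : forall z, 0 <= lz z.
Proof. intros. unfold lz. rewrite <- ln_1. apply ln_le'. lra. pose proof (exp_pos (-z)). lra. Qed.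

Lemma sg_ge_lz_half : forall z, 0 <= z -> lz z / 2 <= sg z.
Proof. intros. pose proof (lz_le_exp z). pose proof (sg_ge_exp_half z H). lra. Qed.

Lemma lz_decr : forall z1 z2, z1 <= z2 -> lz z2 <= lz z1.
Proof. intros. unfold lz. apply ln_le'. pose proof (exp_pos (-z2)). lra.
  assert (exp (-z2) <= exp (-z1)) by (apply exp_le'; lra). lra. Qed.

Lemma sg0 : sg 0 = 1/2.
Proof. unfold sg. rewrite Ropp_0, exp_0. field. Qed.

Lemma kappa_bounds : forall eta, 1 <= eta ->
  1/(8*eta) <= exp (1/(8*eta)) - 1 <= 8/7 * (1/(8*eta)).
Proof. intros eta He. set (th := 1/(8*eta)).
  assert (Hth : 0 < th <= 1/8).
  { unfold th. split. apply Rdiv_lt_0_compat; lra.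
    apply Rmult_le_reg_r with (8*eta). lra. unfold Rdiv. rewrite Rmult_assoc, Rinv_l by lra. lra. }
  split. pose proof (exp_ineq1_le th). lra.
  pose proof (exp_ineq1_le (-th)). pose proof (exp_pos th).
  assert (exp th * exp (-th) = 1) by (rewrite <- exp_plus; replace (th + -th) with 0 by ring; apply exp_0).
  assert (exp th * (1 - th) <= 1) by nra.
  nra. Qed.

Lemma lam_facts : forall eta gamma, 1 <= eta -> 0 < gamma ->
  exp (- (gamma * lambda eta gamma)) = exp (1/(8*eta)) - 1 /\
  0 <= gamma * lambda eta gamma /\
  lz (gamma * lambda eta gamma) = 1/(8*eta).
Proof. intros eta gamma He Hg. pose proof (kappa_bounds eta He) as [K1 K2].
  assert (Hth : 0 < 1/(8*eta)) by (apply Rdiv_lt_0_compat; lra).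
  assert (Hth2 : 1/(8*eta) <= 1/8).
  { apply Rmult_le_reg_r with (8*eta). lra. unfold Rdiv. rewrite Rmult_assoc, Rinv_l by lra. lra. }
  set (k := exp (1/(8*eta)) - 1) in *.
  assert (Hk : 0 < k) by lra.
  assert (EL : gamma * lambda eta gamma = - ln k).
  { unfold lambda. fold k.
    replace (1/k) with (/k) by (unfold Rdiv; ring). rewrite ln_Rinv by lra. field. lra. }
  rewrite EL. split. rewrite Ropp_involutive. apply exp_ln. lra.
  split. assert (ln k <= ln 1) by (apply ln_le'; lra). rewrite ln_1 in H. lra.
  unfold lz. rewrite Ropp_involutive, exp_ln by lra. unfold k.
  replace (1 + (exp (1 / (8 * eta)) - 1)) with (exp (1/(8*eta))) by ring. apply ln_exp. Qed.


Definition Setting (n : nat) (x : nat -> vec2) (gamma eta : R) (ws v : vec2) : Prop :=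
  (0 < n)%nat /\
  (forall i, (i < n)%nat -> dot (x i) (x i) <= 1) /\
  (forall i, (i < n)%nat -> gamma <= dot (x i) ws) /\
  vnorm ws = 1 /\ vnorm v = 1 /\ dot v ws = 0 /\
  0 < gamma /\ gamma <= 1 /\ INR n <= eta /\
  32 / gamma ^ 2 * ln (256 / gamma ^ 2) <= eta.

Definition hat n x eta ws s := dot (gd n x eta s) ws.
Definition zz n x eta s i := dot (gd n x eta s) (x i).


Lemma S_basic : forall n x gamma eta ws v, Setting n x gamma eta ws v ->
  0 < INR n /\ 1 <= eta /\ 1 <= eta / INR n /\
  (forall i, (i < n)%nat -> dot (x i) ws ^ 2 + dot (x i) v ^ 2 <= 1) /\
  (forall w i, dot w (x i) = dot w ws * dot (x i) ws + dot w v * dot (x i) v) /\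
  160 / gamma ^ 2 <= eta.
Proof. intros n x gamma eta ws v HS.
  destruct HS as (Hn & Hx & Ha & Hws & Hv & Hvw & Hg & Hg1 & Hen & Hel).
  assert (Hn' : 0 < INR n) by (apply lt_0_INR; auto).
  assert (1 <= INR n) by (replace 1 with (INR 1) by reflexivity; apply le_INR; lia).
  split; [auto|]. split; [lra|]. split.
  { apply le_div. lra. lra. }
  split.
  { intros i Hi. rewrite <- (Rmult_1_l (dot (x i) ws ^ 2)).
    pose proof (decomp ws v Hws Hv Hvw (x i) (x i)). specialize (Hx i Hi). nra. }
  split. { intros. apply decomp; auto. }
  assert (Hl : 5 <= ln (256 / gamma ^ 2)).
  { rewrite <- (ln_exp 5). apply ln_le'. apply exp_pos.
    pose proof exp5_le. assert (0 < gamma^2 <= 1) by (split; nra).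
    assert (256 <= 256 / gamma^2). { apply le_div. lra. nra. } lra. }
  assert (0 < 32 / gamma^2) by (apply Rdiv_lt_0_compat; nra).
  replace (160 / gamma^2) with (32/gamma^2 * 5) by (field; lra). nra.
Qed.

Lemma dot_zero : forall y, dot (0,0) y = 0.
Proof. intros [a b]; unfold dot; simpl; ring. Qed.

Lemma hat_S : forall n x eta ws s, hat n x eta ws (S s) = hat n x eta ws s +
  eta / INR n * rsum (fun i => sg (zz n x eta s i) * dot (x i) ws) n.
Proof. intros. unfold hat, zz. apply gd_S_dot. Qed.

Lemma tl_S : forall n x eta v s, dot (gd n x eta (S s)) v = dot (gd n x eta s) v +
  eta / INR n * rsum (fun i => sg (zz n x eta s i) * dot (x i) v) n.
Proof. intros. unfold zz. apply gd_S_dot. Qed.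

Lemma hat_mono : forall n x gamma eta ws v s, Setting n x gamma eta ws v ->
  hat n x eta ws s <= hat n x eta ws (S s).
Proof. intros n x gamma eta ws v s HS. pose proof (S_basic _ _ _ _ _ _ HS) as (Hn & He & Hen & _).
  destruct HS as (_ & _ & Ha & _ & _ & _ & Hg & _).
  rewrite hat_S. assert (0 <= rsum (fun i => sg (zz n x eta s i) * dot (x i) ws) n).
  { apply rsum_nonneg. intros i Hi. pose proof (sg_pos (zz n x eta s i)). specialize (Ha i Hi). nra. }
  assert (0 <= eta / INR n) by lra. nra. Qed.

Lemma hat_mono_le : forall n x gamma eta ws v s k, Setting n x gamma eta ws v -> (s <= k)%nat ->
  hat n x eta ws s <= hat n x eta ws k.
Proof. intros n x gamma eta ws v s k HS H. induction H. lra.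
  pose proof (hat_mono n x gamma eta ws v m HS). lra. Qed.

Lemma hat_1 : forall n x gamma eta ws v, Setting n x gamma eta ws v ->
  lambda eta gamma <= hat n x eta ws 1.
Proof. intros n x gamma eta ws v HS. pose proof (S_basic _ _ _ _ _ _ HS) as (Hn & He & Hen & _).
  pose proof HS as (_ & _ & Ha & _ & _ & _ & Hg & Hg1 & Hne & Hel).
  rewrite hat_S. unfold hat. simpl gd. rewrite dot_zero.
  assert (H1 : INR n * (gamma / 2) <= rsum (fun i => sg (zz n x eta 0 i) * dot (x i) ws) n).
  { apply rsum_ge_const. intros i Hi. unfold zz. simpl gd. rewrite dot_zero, sg0. specialize (Ha i Hi). lra. }
  assert (H2 : eta * gamma / 2 <= 0 + eta / INR n * rsum (fun i => sg (zz n x eta 0 i) * dot (x i) ws) n).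
  { replace (eta * gamma / 2) with (eta / INR n * (INR n * (gamma / 2))) by (field; lra).
    assert (0 <= eta / INR n) by lra. nra. }
  eapply Rle_trans; [|exact H2].
  pose proof (kappa_bounds eta He) as [K1 K2].
  assert (Hth : 0 < 1/(8*eta)) by (apply Rdiv_lt_0_compat; lra).
  set (k := exp (1/(8*eta)) - 1) in *.
  assert (Hlk : ln (1/k) <= ln (8*eta)).
  { apply ln_le'. apply Rdiv_lt_0_compat; lra. apply div_le. lra.
    replace (8*eta*k) with (k/(1/(8*eta))) by (field; lra). apply le_div. lra. lra. }
  assert (Hg2 : 0 < gamma^2) by nra.
  assert (Hsplit : ln (8*eta) = ln (256/gamma^2) + ln (eta*gamma^2/32)).
  { rewrite <- ln_mult. f_equal. field. lra. apply Rdiv_lt_0_compat; lra. apply Rdiv_lt_0_compat; nra. }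
  assert (HL1 : ln (256/gamma^2) <= eta * gamma^2 / 32).
  { apply Rmult_le_reg_l with (32/gamma^2). apply Rdiv_lt_0_compat; lra.
    replace (32 / gamma ^ 2 * (eta * gamma ^ 2 / 32)) with eta by (field; lra). lra. }
  assert (HL2 : ln (eta*gamma^2/32) <= eta*gamma^2/32) by (apply ln_le_self; apply Rdiv_lt_0_compat; nra).
  unfold lambda. fold k.
  assert (ln (1/k) <= eta * gamma^2 / 2) by nra.
  replace (eta * gamma / 2) with (/gamma * (eta*gamma^2/2)) by (field; lra).
  apply Rmult_le_compat_l. left; apply Rinv_0_lt_compat; lra. lra. Qed.

Lemma hat_ge_lam : forall n x gamma eta ws v s, Setting n x gamma eta ws v -> (1 <= s)%nat ->
  lambda eta gamma <= hat n x eta ws s.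
Proof. intros. pose proof (hat_1 _ _ _ _ _ _ H). pose proof (hat_mono_le n x gamma eta ws v 1 s H H0). lra. Qed.

Lemma F_le_if_all : forall n x gamma eta w, (0 < n)%nat -> 1 <= eta -> 0 < gamma ->
  (forall i, (i < n)%nat -> gamma * lambda eta gamma <= dot w (x i)) -> F n x w <= 1/(8*eta).
Proof. intros n x gamma eta w Hn He Hg H. rewrite F_eq.
  pose proof (lam_facts eta gamma He Hg) as (_ & _ & L3).
  assert (Hn' : 0 < INR n) by (apply lt_0_INR; auto).
  assert (rsum (fun i => lz (dot w (x i))) n <= INR n * (1/(8*eta))).
  { apply rsum_le_const. intros i Hi. rewrite <- L3. apply lz_decr. auto. }
  replace (1/(8*eta)) with (/ INR n * (INR n * (1/(8*eta)))) by (field; lra).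
  apply Rmult_le_compat_l. left; apply Rinv_0_lt_compat; lra. auto. Qed.

Lemma zz_dec : forall n x gamma eta ws v s i, Setting n x gamma eta ws v ->
  zz n x eta s i = hat n x eta ws s * dot (x i) ws + dot (gd n x eta s) v * dot (x i) v.
Proof. intros. pose proof (S_basic _ _ _ _ _ _ H) as (_ & _ & _ & _ & Hd & _). unfold zz, hat. apply Hd. Qed.

Lemma hat_inc : forall n x gamma eta ws v s, Setting n x gamma eta ws v ->
  F n x (gd n x eta s) > 1/(8*eta) -> hat n x eta ws s + gamma/16 <= hat n x eta ws (S s).
Proof. intros n x gamma eta ws v s HS HF. pose proof (S_basic _ _ _ _ _ _ HS) as (Hn & He & Hen & _).
  pose proof HS as (Hn0 & _ & Ha & _ & _ & _ & Hg & Hg1 & Hne & Hel).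
  rewrite hat_S. set (f := fun i => sg (zz n x eta s i) * dot (x i) ws).
  assert (Hf : forall i, (i < n)%nat -> 0 <= f i).
  { intros i Hi. unfold f. pose proof (sg_pos (zz n x eta s i)). specialize (Ha i Hi). nra. }
  enough (gamma/16 <= eta / INR n * rsum f n) by lra.
  destruct (classic (exists i, (i < n)%nat /\ zz n x eta s i <= 0)) as [[k [Hk Hz]]|Hno].
  - assert (f k <= rsum f n) by (apply rsum_ge_term; auto).
    assert (gamma / 2 <= f k). { unfold f. pose proof (sg_ge_half _ Hz). specialize (Ha k Hk). nra. }
    assert (0 <= rsum f n) by (apply rsum_nonneg; auto). nra.
  - assert (Hpt : forall i, (i < n)%nat -> gamma / 2 * lz (zz n x eta s i) <= f i).
    { intros i Hi. assert (0 <= zz n x eta s i) by (destruct (Rle_dec (zz n x eta s i) 0); [exfalso; apply Hno; exists i; split; auto; lra| lra]).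
      pose proof (sg_ge_lz_half _ H). pose proof (lz_nonneg (zz n x eta s i)). specialize (Ha i Hi). unfold f. nra. }
    assert (gamma / 2 * rsum (fun i => lz (zz n x eta s i)) n <= rsum f n).
    { rewrite <- rsum_scal. apply rsum_le. auto. }
    rewrite F_eq in HF. change (fun i => lz (dot (gd n x eta s) (x i))) with (fun i => lz (zz n x eta s i)) in HF.
    assert (HF' : INR n / (8 * eta) < rsum (fun i => lz (zz n x eta s i)) n).
    { replace (rsum (fun i => lz (zz n x eta s i)) n) with (INR n * (/ INR n * rsum (fun i => lz (zz n x eta s i)) n)) by (field; lra).
      unfold Rdiv. replace (INR n * / (8*eta)) with (INR n * (1/(8*eta))) by (unfold Rdiv; ring).
      apply Rmult_lt_compat_l; lra. }
    replace (gamma/16) with (eta / INR n * (gamma / 2 * (INR n / (8 * eta)))) by (field; lra).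
    apply Rmult_le_compat_l. lra. nra.
Qed.

Lemma tl_step_bounds : forall n x gamma eta ws v s, Setting n x gamma eta ws v ->
  Rabs (dot (gd n x eta (S s)) v - dot (gd n x eta s) v) <= eta.
Proof. intros n x gamma eta ws v s HS. pose proof (S_basic _ _ _ _ _ _ HS) as (Hn & He & Hen & Hab & _).
  rewrite tl_S. replace (dot (gd n x eta s) v + eta / INR n * rsum (fun i => sg (zz n x eta s i) * dot (x i) v) n - dot (gd n x eta s) v)
    with (eta / INR n * rsum (fun i => sg (zz n x eta s i) * dot (x i) v) n) by ring.
  assert (H1 : rsum (fun i => sg (zz n x eta s i) * dot (x i) v) n <= INR n * 1).
  { apply rsum_le_const. intros i Hi. specialize (Hab i Hi). pose proof (sg_pos (zz n x eta s i)). pose proof (sg_le1 (zz n x eta s i)).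
    assert (dot (x i) v <= 1) by nra. nra. }
  assert (H2 : INR n * (-1) <= rsum (fun i => sg (zz n x eta s i) * dot (x i) v) n).
  { apply rsum_ge_const. intros i Hi. specialize (Hab i Hi). pose proof (sg_pos (zz n x eta s i)). pose proof (sg_le1 (zz n x eta s i)).
    assert (-1 <= dot (x i) v) by nra. nra. }
  assert (0 < eta / INR n) by lra.
  apply Rabs_le. split.
  - replace (-eta) with (eta / INR n * (INR n * (-1))) by (field; lra). apply Rmult_le_compat_l; lra.
  - replace eta with (eta / INR n * (INR n * 1)) at 2 by (field; lra). apply Rmult_le_compat_l; lra.
Qed.

Lemma tl_inc : forall n x gamma eta ws v s, Setting n x gamma eta ws v ->
  0 < dot (gd n x eta s) v -> lambda eta gamma <= hat n x eta ws s ->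
  dot (gd n x eta (S s)) v <= dot (gd n x eta s) v + 1/7.
Proof. intros n x gamma eta ws v s HS Ht Hh. pose proof (S_basic _ _ _ _ _ _ HS) as (Hn & He & Hen & Hab & _).
  pose proof HS as (Hn0 & _ & Ha & _ & _ & _ & Hg & Hg1 & Hne & Hel).
  pose proof (lam_facts eta gamma He Hg) as (L1 & L2 & L3).
  pose proof (kappa_bounds eta He) as [K1 K2].
  assert (Hl0 : 0 <= lambda eta gamma) by (apply Rmult_le_reg_l with gamma; lra).
  set (h := hat n x eta ws s) in *. set (W := dot (gd n x eta s) v) in *.
  assert (Hpt : forall i, (i < n)%nat -> sg (zz n x eta s i) * dot (x i) v <= exp (- (gamma * lambda eta gamma))).
  { intros i Hi. pose proof (sg_pos (zz n x eta s i)). pose proof (exp_pos (- (gamma * lambda eta gamma))).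
    specialize (Hab i Hi). specialize (Ha i Hi).
    destruct (Rle_dec 0 (dot (x i) v)).
    - rewrite (zz_dec n x gamma eta ws v s i HS). fold h W.
      pose proof (sg_le_exp (h * dot (x i) ws + W * dot (x i) v)).
      assert (exp (- (h * dot (x i) ws + W * dot (x i) v)) <= exp (- (gamma * lambda eta gamma))).
      { apply exp_le'. assert (gamma * lambda eta gamma <= gamma * h) by (apply Rmult_le_compat_l; lra).
        assert (gamma * h <= h * dot (x i) ws) by nra. nra. }
      assert (dot (x i) v <= 1) by nra. 
      pose proof (sg_pos (h * dot (x i) ws + W * dot (x i) v)). nra.
    - nra. }
  rewrite tl_S. fold W.
  assert (rsum (fun i => sg (zz n x eta s i) * dot (x i) v) n <= INR n * exp (- (gamma * lambda eta gamma))) by (apply rsum_le_const; auto).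
  rewrite L1 in H. assert (0 < eta / INR n) by lra.
  assert (eta / INR n * rsum (fun i => sg (zz n x eta s i) * dot (x i) v) n <= eta / INR n * (INR n * (exp (1 / (8 * eta)) - 1))) by (apply Rmult_le_compat_l; lra).
  replace (eta / INR n * (INR n * (exp (1 / (8 * eta)) - 1))) with (eta * (exp (1 / (8 * eta)) - 1)) in H1 by (field; lra).
  assert (eta * (exp (1 / (8 * eta)) - 1) <= 1/7).
  { replace (1/7) with (eta * (8/7 * (1/(8*eta)))) by (field; lra). apply Rmult_le_compat_l; lra. }
  lra. Qed.

Definition Qs n x eta v s := rsum (fun i => sg (zz n x eta s i) * Rmax (- dot (x i) v) 0) n.

Lemma Qs_nonneg : forall n x eta v s, 0 <= Qs n x eta v s.
Proof. intros. apply rsum_nonneg. intros. pose proof (sg_pos (zz n x eta s i)). pose proof (Rmax_r (- dot (x i) v) 0). nra. Qed.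

Lemma Qs_ge_term : forall n x eta v s k, (k < n)%nat -> sg (zz n x eta s k) * Rmax (- dot (x k) v) 0 <= Qs n x eta v s.
Proof. intros. unfold Qs. apply (rsum_ge_term (fun i => sg (zz n x eta s i) * Rmax (- dot (x i) v) 0)); auto.
  intros. pose proof (sg_pos (zz n x eta s i)). pose proof (Rmax_r (- dot (x i) v) 0). nra. Qed.

Lemma PQ : forall n x gamma eta ws v s, Setting n x gamma eta ws v ->
  0 < dot (gd n x eta s) v -> gamma * lambda eta gamma + 3 <= gamma * hat n x eta ws s ->
  F n x (gd n x eta s) > 1/(8*eta) ->
  dot (gd n x eta (S s)) v - dot (gd n x eta s) v <= - (9/10) * (eta / INR n) * Qs n x eta v s.
Proof. intros n x gamma eta ws v s HS Ht Hh HF. pose proof (S_basic _ _ _ _ _ _ HS) as (Hn & He & Hen & Hab & _).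
  pose proof HS as (Hn0 & _ & Ha & _ & _ & _ & Hg & Hg1 & Hne & Hel).
  pose proof (lam_facts eta gamma He Hg) as (L1 & L2 & L3).
  pose proof (kappa_bounds eta He) as [K1 K2].
  set (h := hat n x eta ws s) in *. set (W := dot (gd n x eta s) v) in *.
  set (L := gamma * lambda eta gamma) in *.
  set (D := gamma * h - L).
  assert (HD : 3 <= D) by (unfold D; lra).
  assert (Hh0 : 0 <= h) by nra.
  set (th := 1/(8*eta)) in *.
  assert (Hth : 0 < th) by (unfold th; apply Rdiv_lt_0_compat; lra).
  assert (Heth : eta * th = 1/8) by (unfold th; field; lra).
  assert (HE : exp (- (gamma * h)) = exp (- L) * exp (- D)) by (rewrite <- exp_plus; f_equal; unfold D; ring).
  assert (HeD : exp (-D) <= 6/100).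
  { pose proof expm3_lb. assert (exp (-D) <= exp (-3)) by (apply exp_le'; lra). lra. }
  pose proof expm1_lb as Hm1.
  pose proof (exp_pos (-D)). pose proof (exp_pos (-1)). pose proof (exp_pos (-L)).
  set (Pf := fun i => sg (zz n x eta s i) * Rmax (dot (x i) v) 0).
  set (Qf := fun i => sg (zz n x eta s i) * Rmax (- dot (x i) v) 0).
  assert (Hsplit : rsum (fun i => sg (zz n x eta s i) * dot (x i) v) n = rsum Pf n - rsum Qf n).
  { rewrite <- rsum_minus. apply rsum_ext. intros i _. unfold Pf, Qf.
    destruct (Rle_dec 0 (dot (x i) v)).
    - rewrite Rmax_left by lra. rewrite Rmax_right by lra. ring.
    - rewrite Rmax_right by lra. rewrite Rmax_left by lra. ring. }
  assert (HP : rsum Pf n <= INR n * (exp (-L) * exp (-D) * exp (-1) / W)).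
  { apply rsum_le_const. intros i Hi. unfold Pf. specialize (Ha i Hi). specialize (Hab i Hi).
    pose proof (sg_pos (zz n x eta s i)).
    destruct (Rle_dec 0 (dot (x i) v)).
    - rewrite Rmax_left by lra. set (b := dot (x i) v) in *.
      rewrite (zz_dec n x gamma eta ws v s i HS). fold h W b.
      pose proof (sg_le_exp (h * dot (x i) ws + W * b)).
      assert (exp (- (h * dot (x i) ws + W * b)) <= exp (- (gamma * h)) * exp (- (W*b))).
      { rewrite <- exp_plus. apply exp_le'. nra. }
      pose proof (xexp_le (W*b)).
      pose proof (exp_pos (- (W*b))). pose proof (exp_pos (- (gamma*h))).
      assert (b * exp (- (W*b)) <= exp (-1) / W).
      { apply le_div. lra. nra. }
      rewrite <- HE.
      assert (sg (h * dot (x i) ws + W * b) * b <= exp (- (gamma * h)) * exp (- (W*b)) * b) by nra.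
      replace (exp (- (gamma * h)) * exp (-1) / W) with (exp (- (gamma * h)) * (exp (-1) / W)) by (unfold Rdiv; ring).
      nra.
    - rewrite Rmax_right by lra. rewrite Rmult_0_r.
      apply Rlt_le. apply Rdiv_lt_0_compat; [|lra]. repeat apply Rmult_lt_0_compat; lra. }
  assert (HP2 : rsum Pf n <= INR n * (6/100 * (39/100) * (8/7) * th) / W).
  { assert (exp (-L) * exp (-D) * exp (-1) <= 6/100 * (39/100) * (8/7) * th).
    { rewrite L1. assert (A1 : (exp th - 1) * exp (-D) <= 8/7*th * (6/100)) by (apply Rmult_le_compat; lra).
      assert (A2 : (exp th - 1) * exp (-D) * exp (-1) <= 8/7*th * (6/100) * (39/100)) by (apply Rmult_le_compat; nra).
      lra. }
    assert (INR n * (exp (-L) * exp (-D) * exp (-1) / W) <= INR n * (6/100 * (39/100) * (8/7) * th) / W).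
    { unfold Rdiv. rewrite <- Rmult_assoc. apply Rmult_le_compat_r. left; apply Rinv_0_lt_compat; lra.
      apply Rmult_le_compat_l; lra. }
    lra. }
  assert (HQ : INR n * (55/100 * th) / W <= rsum Qf n).
  { destruct (classic (exists k, (k < n)%nat /\ zz n x eta s k < 0)) as [[k [Hk Hz]]|Hno].
    - assert (HQk : Qf k <= rsum Qf n) by (apply (Qs_ge_term n x eta v s k Hk)).
      specialize (Ha k Hk). rewrite (zz_dec n x gamma eta ws v s k HS) in Hz. fold h W in Hz.
      assert (Hb : W * (- dot (x k) v) > 3) by nra.
      assert (Hb0 : 0 < - dot (x k) v) by nra.
      unfold Qf in HQk. rewrite Rmax_left in HQk by lra. change (rsum (fun i => sg (zz n x eta s i) * Rmax (- dot (x i) v) 0) n) with (rsum Qf n) in HQk.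
      pose proof (sg_ge_half (zz n x eta s k)) as Hsg. 
      assert (Hz' : zz n x eta s k <= 0) by (rewrite (zz_dec n x gamma eta ws v s k HS); fold h W; lra).
      specialize (Hsg Hz').
      assert (Hq1 : (- dot (x k) v) / 2 <= rsum Qf n) by nra.
      assert (3 / (2*W) <= rsum Qf n).
      { apply div_le. lra. nra. }
      assert (INR n * (55/100*th) <= 3/2).
      { assert (INR n * th <= 1/8) by (rewrite <- Heth; apply Rmult_le_compat_r; lra). nra. }
      assert (INR n * (55 / 100 * th) / W <= 3 / (2*W)).
      { apply div_le. lra. replace (3 / (2 * W) * W) with (3/2) by (field; lra). lra. }
      lra.
    - set (c := exp (-L) * exp (-1)).
      assert (Hc : c <= 8/7 * th * (39/100)) by (unfold c; rewrite L1; apply Rmult_le_compat; lra).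
      assert (Hc0 : 0 <= c) by (unfold c; apply Rmult_le_pos; lra).
      assert (Hpt : forall i, (i < n)%nat -> (D - 1) / (2 * W) * (lz (zz n x eta s i) - c) <= Qf i).
      { intros i Hi. unfold Qf. specialize (Ha i Hi).
        assert (Hz0 : 0 <= zz n x eta s i) by (destruct (Rle_dec 0 (zz n x eta s i)); [lra| exfalso; apply Hno; exists i; split; auto; lra]).
        pose proof (lz_nonneg (zz n x eta s i)). pose proof (sg_pos (zz n x eta s i)).
        set (bm := Rmax (- dot (x i) v) 0).
        assert (Hbm0 : 0 <= bm) by apply Rmax_r.
        assert (Hbm1 : - dot (x i) v <= bm) by apply Rmax_l.
        assert (HDW : 0 < (D-1)/(2*W)) by (apply Rdiv_lt_0_compat; lra).
        destruct (Rle_dec (bm * W) (D - 1)).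
        + assert (lz (zz n x eta s i) <= c).
          { eapply Rle_trans. apply lz_le_exp. unfold c. rewrite <- exp_plus. apply exp_le'.
            rewrite (zz_dec n x gamma eta ws v s i HS). fold h W. 
            assert (gamma * h <= h * dot (x i) ws) by nra.
            assert (- (bm * W) <= W * dot (x i) v) by nra. unfold D in r. lra. }
          assert ((D - 1) / (2 * W) * (lz (zz n x eta s i) - c) <= 0) by nra.
          nra.
        + pose proof (sg_ge_lz_half _ Hz0).
          assert ((D - 1) / (2 * W) <= bm / 2).
          { apply div_le. lra. nra. }
          nra. }
      assert (rsum (fun i => (D - 1) / (2 * W) * (lz (zz n x eta s i) - c)) n <= rsum Qf n) by (apply rsum_le; auto).
      rewrite rsum_scal, rsum_minus, rsum_const in H2.
      rewrite F_eq in HF. change (fun i => lz (dot (gd n x eta s) (x i))) with (fun i => lz (zz n x eta s i)) in HF.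
      assert (HF' : INR n * th < rsum (fun i => lz (zz n x eta s i)) n).
      { replace (rsum (fun i => lz (zz n x eta s i)) n) with (INR n * (/ INR n * rsum (fun i => lz (zz n x eta s i)) n)) by (field; lra).
        apply Rmult_lt_compat_l; lra. }
      assert (INR n * (55/100*th) <= (rsum (fun i => lz (zz n x eta s i)) n - INR n * c)) by nra.
      assert (1 / W <= (D - 1) / (2 * W)).
      { apply le_div. lra. replace (1 / W * (2 * W)) with 2 by (field; lra). lra. }
      assert (0 <= INR n * (55 / 100 * th)) by nra.
      replace (INR n * (55 / 100 * th) / W) with (1/W * (INR n * (55 / 100 * th))) by (field; lra).
      assert (0 < 1/W) by (apply Rdiv_lt_0_compat; lra).
      nra. }
  rewrite tl_S. fold W. rewrite Hsplit. unfold Qs. fold Qf.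
  assert (rsum Pf n <= rsum Qf n / 10).
  { assert (INR n * (6 / 100 * (39 / 100) * (8 / 7) * th) / W <= INR n * (55 / 100 * th) / W / 10).
    { unfold Rdiv. rewrite !Rmult_assoc. apply Rmult_le_compat_l. lra.
      assert (0 < / W) by (apply Rinv_0_lt_compat; lra). nra. }
    lra. }
  assert (0 < eta / INR n) by lra.
  nra.
Qed.

Lemma N_mono : forall n x gamma eta ws v s i, Setting n x gamma eta ws v -> (i < n)%nat ->
  dot (gd n x eta (S s)) v <= dot (gd n x eta s) v -> dot (x i) v <= 0 ->
  zz n x eta s i + gamma * (hat n x eta ws (S s) - hat n x eta ws s) <= zz n x eta (S s) i.
Proof. intros n x gamma eta ws v s i HS Hi Ht Hb.
  pose proof HS as (_ & _ & Ha & _). specialize (Ha i Hi).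
  pose proof (hat_mono n x gamma eta ws v s HS).
  rewrite !(zz_dec n x gamma eta ws v _ i HS). nra. Qed.

Lemma T_step : forall n x gamma eta ws v s k, Setting n x gamma eta ws v ->
  0 < dot (gd n x eta s) v -> gamma * lambda eta gamma + 3 <= gamma * hat n x eta ws s ->
  F n x (gd n x eta s) > 1/(8*eta) -> (k < n)%nat -> zz n x eta s k < 0 ->
  hat n x eta ws s + eta / INR n * dot (x k) ws / 2 <= hat n x eta ws (S s) /\
  9/10 * (eta / INR n * dot (x k) ws / 2) * hat n x eta ws s / dot (gd n x eta s) v
    <= dot (gd n x eta s) v - dot (gd n x eta (S s)) v.
Proof. intros n x gamma eta ws v s k HS Ht Hh HF Hk Hz.
  pose proof (S_basic _ _ _ _ _ _ HS) as (Hn & He & Hen & Hab & _).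
  pose proof HS as (Hn0 & _ & Ha & _ & _ & _ & Hg & Hg1 & Hne & Hel).
  pose proof (lam_facts eta gamma He Hg) as (L1 & L2 & L3).
  pose proof (PQ n x gamma eta ws v s HS Ht Hh HF) as HPQ.
  pose proof (Qs_ge_term n x eta v s k Hk) as HQk.
  assert (Hh0 : 0 <= hat n x eta ws s) by nra.
  pose proof (Ha k Hk) as Hak.
  pose proof (sg_ge_half _ (Rlt_le _ _ Hz)) as Hsg.
  split.
  - rewrite hat_S. 
    assert (sg (zz n x eta s k) * dot (x k) ws <= rsum (fun i => sg (zz n x eta s i) * dot (x i) ws) n).
    { apply (rsum_ge_term (fun i => sg (zz n x eta s i) * dot (x i) ws)); auto.
      intros i Hi. pose proof (sg_pos (zz n x eta s i)). specialize (Ha i Hi). nra. }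
    assert (dot (x k) ws / 2 <= rsum (fun i => sg (zz n x eta s i) * dot (x i) ws) n) by nra.
    assert (0 < eta / INR n) by lra.
    assert (eta / INR n * (dot (x k) ws / 2) <= eta / INR n * rsum (fun i => sg (zz n x eta s i) * dot (x i) ws) n) by (apply Rmult_le_compat_l; lra).
    lra.
  - set (W := dot (gd n x eta s) v) in *. set (h := hat n x eta ws s) in *.
    rewrite (zz_dec n x gamma eta ws v s k HS) in Hz. fold h W in Hz.
    assert (Hb0 : 0 < - dot (x k) v) by nra.
    rewrite Rmax_left in HQk by lra.
    assert (Hq1 : (- dot (x k) v) / 2 <= Qs n x eta v s) by nra.
    assert (Hq2 : h * dot (x k) ws / (2 * W) <= Qs n x eta v s).
    { apply div_le. lra. nra. }
    assert (0 < eta / INR n) by lra.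
    assert (9/10 * (eta / INR n) * (h * dot (x k) ws / (2 * W)) <= 9/10 * (eta / INR n) * Qs n x eta v s) by (apply Rmult_le_compat_l; lra).
    replace (9 / 10 * (eta / INR n * dot (x k) ws / 2) * h / W) with (9/10 * (eta / INR n) * (h * dot (x k) ws / (2 * W))) by (field; lra).
    lra.
Qed.

Definition cN (x : nat -> vec2) (v : vec2) (i : nat) : R := if Rle_dec (dot (x i) v) 0 then 1 else 0.
Definition EN n x eta v s := rsum (fun i => cN x v i * exp (- zz n x eta s i)) n.

Lemma EN_nonneg : forall n x eta v s, 0 <= EN n x eta v s.
Proof. intros. apply rsum_nonneg. intros. unfold cN. pose proof (exp_pos (- zz n x eta s i)). destruct (Rle_dec _ _); lra. Qed.

Lemma E_step : forall n x gamma eta ws v s, Setting n x gamma eta ws v ->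
  dot (gd n x eta (S s)) v <= dot (gd n x eta s) v ->
  (forall i, (i < n)%nat -> 0 <= zz n x eta s i) ->
  EN n x eta v (S s) <= EN n x eta v s * exp (- (gamma^2 * (eta / INR n) * EN n x eta v s / 2)).
Proof. intros n x gamma eta ws v s HS Ht Hz.
  pose proof (S_basic _ _ _ _ _ _ HS) as (Hn & He & Hen & Hab & _).
  pose proof HS as (Hn0 & _ & Ha & _ & _ & _ & Hg & Hg1 & Hne & Hel).
  set (dh := hat n x eta ws (S s) - hat n x eta ws s).
  assert (H1 : EN n x eta v (S s) <= EN n x eta v s * exp (- (gamma * dh))).
  { unfold EN. rewrite Rmult_comm, <- rsum_scal. apply rsum_le. intros i Hi.
    unfold cN. destruct (Rle_dec (dot (x i) v) 0).
    - pose proof (N_mono n x gamma eta ws v s i HS Hi Ht r). fold dh in H.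
      rewrite !Rmult_1_l, <- exp_plus. apply exp_le'. lra.
    - pose proof (exp_pos (- (gamma * dh))). nra. }
  assert (H2 : gamma^2 * (eta / INR n) * EN n x eta v s / 2 <= gamma * dh).
  { unfold dh. rewrite hat_S.
    replace (hat n x eta ws s + eta / INR n * rsum (fun i => sg (zz n x eta s i) * dot (x i) ws) n - hat n x eta ws s)
      with (eta / INR n * rsum (fun i => sg (zz n x eta s i) * dot (x i) ws) n) by ring.
    assert (rsum (fun i => gamma / 2 * (cN x v i * exp (- zz n x eta s i))) n <= rsum (fun i => sg (zz n x eta s i) * dot (x i) ws) n).
    { apply rsum_le. intros i Hi. specialize (Ha i Hi). pose proof (sg_pos (zz n x eta s i)).
      pose proof (sg_ge_exp_half _ (Hz i Hi)). pose proof (exp_pos (- zz n x eta s i)).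
      unfold cN. destruct (Rle_dec _ _); nra. }
    rewrite rsum_scal in H. fold (EN n x eta v s) in H.
    assert (0 < eta / INR n) by lra.
    assert (eta / INR n * (gamma / 2 * EN n x eta v s) <= eta / INR n * rsum (fun i => sg (zz n x eta s i) * dot (x i) ws) n) by (apply Rmult_le_compat_l; lra).
    replace (gamma ^ 2 * (eta / INR n) * EN n x eta v s / 2) with (gamma * (eta / INR n * (gamma / 2 * EN n x eta v s))) by (field; lra).
    apply Rmult_le_compat_l; lra. }
  pose proof (EN_nonneg n x eta v s).
  assert (exp (- (gamma * dh)) <= exp (- (gamma ^ 2 * (eta / INR n) * EN n x eta v s / 2))) by (apply exp_le'; lra).
  nra.
Qed.

Lemma F_bound_E : forall n x gamma eta ws v s, Setting n x gamma eta ws v ->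
  0 < dot (gd n x eta s) v -> gamma * lambda eta gamma + 3 <= gamma * hat n x eta ws s ->
  F n x (gd n x eta s) <= EN n x eta v s / INR n + 8/7 * (1/(8*eta)) * (6/100).
Proof. intros n x gamma eta ws v s HS Ht Hh.
  pose proof (S_basic _ _ _ _ _ _ HS) as (Hn & He & Hen & Hab & _).
  pose proof HS as (Hn0 & _ & Ha & _ & _ & _ & Hg & Hg1 & Hne & Hel).
  pose proof (lam_facts eta gamma He Hg) as (L1 & L2 & L3).
  pose proof (kappa_bounds eta He) as [K1 K2].
  set (h := hat n x eta ws s) in *. set (W := dot (gd n x eta s) v) in *.
  set (L := gamma * lambda eta gamma) in *.
  assert (Hh0 : 0 <= h) by nra.
  assert (HE : exp (- (gamma * h)) <= 8/7 * (1/(8*eta)) * (6/100)).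
  { replace (- (gamma * h)) with (- L + - (gamma*h - L)) by ring. rewrite exp_plus, L1.
    pose proof expm3_lb. assert (exp (- (gamma * h - L)) <= exp (-3)) by (apply exp_le'; lra).
    pose proof (exp_pos (- (gamma * h - L))).
    apply Rmult_le_compat; lra. }
  rewrite F_eq. change (fun i => lz (dot (gd n x eta s) (x i))) with (fun i => lz (zz n x eta s i)).
  assert (rsum (fun i => lz (zz n x eta s i)) n <= rsum (fun i => cN x v i * exp (- zz n x eta s i) + exp (- (gamma * h))) n).
  { apply rsum_le. intros i Hi. pose proof (lz_le_exp (zz n x eta s i)). pose proof (exp_pos (- (gamma*h))).
    pose proof (exp_pos (- zz n x eta s i)).
    unfold cN. destruct (Rle_dec _ _). lra.
    assert (exp (- zz n x eta s i) <= exp (- (gamma * h))).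
    { apply exp_le'. rewrite (zz_dec n x gamma eta ws v s i HS). fold h W. specialize (Ha i Hi). nra. }
    lra. }
  rewrite rsum_plus, rsum_const in H. fold (EN n x eta v s) in H.
  assert (/ INR n * rsum (fun i => lz (zz n x eta s i)) n <= / INR n * (EN n x eta v s + INR n * exp (- (gamma * h)))).
  { apply Rmult_le_compat_l. left; apply Rinv_0_lt_compat; lra. auto. }
  replace (/ INR n * (EN n x eta v s + INR n * exp (- (gamma * h)))) with (EN n x eta v s / INR n + exp (- (gamma * h))) in H0 by (field; lra).
  lra.
Qed.


Lemma T_phase : forall (h W : nat -> R) (s0 M : nat) (Ws amin amax : R),
  0 < amin -> amin <= amax -> 0 <= h s0 -> W s0 <= Ws -> 0 < Ws ->
  (forall k, (k < M)%nat -> 0 < W (s0+k)%nat /\ W (s0+k+1)%nat <= W (s0+k)%nat /\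
     exists a, amin <= a <= amax /\ h (s0+k)%nat + a <= h (s0+k+1)%nat /\
       9/10 * a * h (s0+k)%nat / W (s0+k)%nat <= W (s0+k)%nat - W (s0+k+1)%nat) ->
  0 < W (s0+M)%nat ->
  exists A, INR M * amin <= A /\ A * A - amax * A <= 20/9 * (Ws * Ws).
Proof. intros h W s0 M Ws amin amax Ha0 Ha1 Hh0 HW0 HWs Hstep HWM.
  assert (Inv : forall k, (k <= M)%nat -> exists A, INR k * amin <= A /\ 0 <= A /\ A <= h (s0+k)%nat /\
     W (s0+k)%nat <= Ws /\ A * A - amax * A <= 20/9 * Ws * (W s0 - W (s0+k)%nat)).
  { induction k; intros Hk.
    - exists 0. rewrite Nat.add_0_r. simpl. repeat split; lra.
    - destruct IHk as (A & H1 & H2 & H3 & H4 & H5). lia.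
      destruct (Hstep k ltac:(lia)) as (Hp & Hd & a & Ha & Hh & Hw).
      replace (s0 + S k)%nat with (s0 + k + 1)%nat by lia.
      exists (A + a). rewrite S_INR. 
      assert (Hq : 2 * a * A <= 20/9 * Ws * (W (s0+k)%nat - W (s0+k+1)%nat)).
      { assert (9 / 10 * a * A / W (s0 + k)%nat <= 9 / 10 * a * h (s0 + k)%nat / W (s0 + k)%nat).
        { unfold Rdiv. apply Rmult_le_compat_r. left; apply Rinv_0_lt_compat; lra. nra. }
        assert (2 * a * A <= 20/9 * Ws * (9 / 10 * a * A / W (s0 + k)%nat)).
        { replace (20 / 9 * Ws * (9 / 10 * a * A / W (s0 + k)%nat)) with (2 * a * A * (Ws / W (s0+k)%nat)) by (field; lra).
          assert (1 <= Ws / W (s0+k)%nat) by (apply le_div; lra).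
          assert (0 <= 2*a*A) by nra. nra. }
        assert (0 <= 20/9*Ws) by lra. nra. }
      repeat split; try nra. }
  destruct (Inv M (le_n M)) as (A & H1 & H2 & H3 & H4 & H5).
  exists A. split. auto. nra.
Qed.

Lemma y_phase : forall (y : nat -> R) (s0 J : nat),
  (forall k, (k <= J)%nat -> 0 <= y (s0+k)%nat) ->
  (forall k, (k < J)%nat -> y (s0+k+1)%nat <= y (s0+k)%nat * exp (- y (s0+k)%nat)) ->
  y (s0+J)%nat * INR J <= 1.
Proof. intros y s0 J Hpos Hrec.
  assert (forall k, (k <= J)%nat -> y (s0+k)%nat * INR k <= 1).
  { induction k; intros Hk. simpl. rewrite Rmult_0_r. lra.
    specialize (IHk ltac:(lia)). specialize (Hrec k ltac:(lia)).
    pose proof (Hpos k ltac:(lia)) as Hp. pose proof (Hpos (S k) Hk) as Hp'.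
    replace (s0 + S k)%nat with (s0 + k + 1)%nat in * by lia.
    set (a := y (s0+k)%nat) in *. set (b := y (s0+k+1)%nat) in *.
    pose proof (exp_ineq1_le a). pose proof (exp_pos (-a)).
    assert (exp a * exp (-a) = 1) by (rewrite <- exp_plus; replace (a + -a) with 0 by ring; apply exp_0).
    assert (b * (1 + a) <= a) by nra.
    rewrite S_INR. pose proof (pos_INR k). nra. }
  apply H. lia.
Qed.


Lemma nat_above : forall r, 0 <= r -> exists N : nat, r <= INR N <= r + 1.
Proof. intros r Hr. destruct (archimed r) as [H1 H2].
  assert (Hz : (0 <= up r)%Z). { apply le_IZR. lra. }
  exists (Z.to_nat (up r)). rewrite INR_IZR_INZ, Z2Nat.id by auto. lra. Qed.

Lemma core : forall n x gamma eta ws v u0 Sn, Setting n x gamma eta ws v -> (1 <= u0)%nat ->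
  (forall s, (u0 <= s)%nat -> (s <= Sn)%nat -> F n x (gd n x eta s) > 1/(8*eta) /\ 0 < dot (gd n x eta s) v) ->
  dot (gd n x eta u0) v <= eta ->
  INR u0 + 37/10 * INR n / gamma + 66 / gamma^2 + 3 <= INR Sn -> False.
Proof. intros n x gamma eta ws v u0 Sn HS Hu0 Hwin HW0 HSb.
  pose proof (S_basic _ _ _ _ _ _ HS) as (Hn & He & Hen & Hab & Hdec & He160).
  pose proof HS as (Hn0 & _ & Ha & _ & _ & _ & Hg & Hg1 & Hne & Hel).
  pose proof (lam_facts eta gamma He Hg) as (L1 & L2 & L3).
  assert (Hl0 : 0 <= lambda eta gamma) by (apply Rmult_le_reg_l with gamma; lra).
  assert (Hg2 : 0 < gamma^2) by nra.
  assert (Hg2' : 1 <= 1/gamma^2) by (apply le_div; nra).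
  destruct (nat_above (48/gamma^2)) as [NA [HNA1 HNA2]]. left; apply Rdiv_lt_0_compat; lra.
  destruct (nat_above (37/10*INR n/gamma)) as [M [HM1 HM2]]. left; apply Rdiv_lt_0_compat; lra.
  destruct (nat_above (18/gamma^2)) as [J [HJ1 HJ2]]. left; apply Rdiv_lt_0_compat; lra.
  assert (Hsum : (u0 + NA + M + J <= Sn)%nat).
  { apply INR_le. rewrite !plus_INR. lra. }
  set (h := fun s => hat n x eta ws s).
  set (W := fun s => dot (gd n x eta s) v).
  assert (Hlam : forall s, (u0 <= s)%nat -> lambda eta gamma <= h s).
  { intros s Hs. apply (hat_ge_lam n x gamma eta ws v s HS). lia. }
  assert (Hinc : forall k, (u0 + k <= Sn)%nat -> h u0 + INR k * gamma / 16 <= h (u0 + k)%nat).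
  { induction k; intros Hk. rewrite Nat.add_0_r. simpl. lra.
    specialize (IHk ltac:(lia)). rewrite S_INR. replace (u0 + S k)%nat with (S (u0 + k)) by lia.
    pose proof (hat_inc n x gamma eta ws v (u0+k) HS (proj1 (Hwin (u0+k)%nat ltac:(lia) ltac:(lia)))).
    unfold h in *. lra. }
  set (sA := (u0 + NA)%nat).
  assert (HA : forall s, (sA <= s)%nat -> (s <= Sn)%nat -> gamma * lambda eta gamma + 3 <= gamma * hat n x eta ws s).
  { intros s H1 H2. pose proof (Hinc NA ltac:(unfold sA in *; lia)). pose proof (Hlam u0 (le_n _)).
    pose proof (hat_mono_le n x gamma eta ws v sA s HS H1). unfold h in *. fold sA in H.
    assert (3 <= gamma * (INR NA * gamma / 16)).
    { replace (gamma * (INR NA * gamma / 16)) with (gamma^2 * INR NA / 16) by (field).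
      assert (48 <= gamma^2 * INR NA).
      { replace 48 with (gamma^2 * (48/gamma^2)) by (field; lra). apply Rmult_le_compat_l; lra. }
      lra. }
    nra. }
  assert (HWb : forall k, (u0 + k <= Sn)%nat -> W (u0 + k)%nat <= W u0 + INR k / 7).
  { induction k; intros Hk. rewrite Nat.add_0_r. simpl. lra.
    specialize (IHk ltac:(lia)). rewrite S_INR. replace (u0 + S k)%nat with (S (u0 + k)) by lia.
    pose proof (Hwin (u0+k)%nat ltac:(lia) ltac:(lia)) as [_ Hp].
    pose proof (tl_inc n x gamma eta ws v (u0+k) HS Hp (Hlam (u0+k)%nat ltac:(lia))).
    unfold W in *. lra. }
  assert (HWA : W sA <= eta * (1 + 7/160)).
  { pose proof (HWb NA ltac:(unfold sA in *; lia)). fold sA in H. unfold W in H at 2. 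
    assert (INR NA / 7 <= 7 / gamma^2).
    { apply div_le. lra. replace (7 / gamma^2 * 7) with (49/gamma^2) by (field; lra). 
      replace (49 / gamma^2) with (48/gamma^2 + 1/gamma^2) by (field; lra). lra. }
    assert (7 / gamma^2 <= eta * (7/160)).
    { replace (7 / gamma^2) with (7/160 * (160/gamma^2)) by (field; lra). lra. }
    unfold W in *. lra. }
  assert (Hdec' : forall s, (sA <= s)%nat -> (s < Sn)%nat ->
     dot (gd n x eta (Datatypes.S s)) v - dot (gd n x eta s) v <= - (9/10) * (eta / INR n) * Qs n x eta v s).
  { intros s H1 H2. pose proof (Hwin s ltac:(unfold sA in *; lia) ltac:(lia)) as [HF Hp].
    apply (PQ n x gamma eta ws v s HS Hp (HA s H1 ltac:(lia)) HF). }
  assert (Hmon : forall s, (sA <= s)%nat -> (s < Sn)%nat -> W (Datatypes.S s) <= W s).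
  { intros s H1 H2. pose proof (Hdec' s H1 H2). pose proof (Qs_nonneg n x eta v s).
    assert (0 < eta / INR n) by lra. unfold W. nra. }
  assert (HWpos : forall s, (u0 <= s)%nat -> (s <= Sn)%nat -> 0 < W s).
  { intros s H1 H2. apply (Hwin s H1 H2). }
  destruct (classic (exists j, (j < M)%nat /\ forall i, (i < n)%nat -> 0 <= zz n x eta (sA + j)%nat i)) as [[j [Hj Hz]]|Hno].
  - set (sB := (sA + j)%nat).
    assert (Hall : forall k, (sB + k <= Sn)%nat -> forall i, (i < n)%nat -> 0 <= zz n x eta (sB + k)%nat i).
    { induction k; intros Hk i Hi. rewrite Nat.add_0_r. apply Hz; auto.
      replace (sB + Datatypes.S k)%nat with (Datatypes.S (sB + k)) by lia.
      destruct (Rle_dec (dot (x i) v) 0) as [Hb|Hb].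
      + pose proof (N_mono n x gamma eta ws v (sB+k) i HS Hi (Hmon (sB+k)%nat ltac:(unfold sB; lia) ltac:(lia)) Hb).
        pose proof (hat_mono n x gamma eta ws v (sB+k) HS).
        specialize (IHk ltac:(lia) i Hi). nra.
      + rewrite (zz_dec n x gamma eta ws v _ i HS).
        pose proof (Hlam (Datatypes.S (sB+k)) ltac:(unfold sB, sA in *; lia)).
        pose proof (HWpos (Datatypes.S (sB+k)) ltac:(unfold sB, sA in *; lia) ltac:(lia)).
        specialize (Ha i Hi). unfold h, W in *. nra. }
    set (c := gamma^2 * (eta / INR n) / 2).
    assert (Hc : 0 < c) by (unfold c; apply Rdiv_lt_0_compat; [apply Rmult_lt_0_compat|]; lra).
    set (y := fun s => c * EN n x eta v s).
    assert (Hy := y_phase y sB J).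
    assert (HyJ : y (sB + J)%nat * INR J <= 1).
    { apply Hy.
      - intros k _. unfold y. pose proof (EN_nonneg n x eta v (sB+k)). nra.
      - intros k Hk. replace (sB + k + 1)%nat with (Datatypes.S (sB + k)) by lia.
        pose proof (E_step n x gamma eta ws v (sB+k) HS (Hmon (sB+k)%nat ltac:(unfold sB; lia) ltac:(unfold sB,sA in *; lia))
           (Hall k ltac:(unfold sB,sA in *; lia))).
        unfold y. replace (gamma ^ 2 * (eta / INR n) * EN n x eta v (sB + k) / 2) with (c * EN n x eta v (sB + k)) in H by (unfold c; field; lra).
        apply Rmult_le_compat_l with (r := c) in H; [|lra]. lra. }
    assert (Hs : (sB + J <= Sn)%nat) by (unfold sB, sA in *; lia).
    pose proof (Hwin (sB+J)%nat ltac:(unfold sB, sA in *; lia) Hs) as [HF Hp].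
    pose proof (F_bound_E n x gamma eta ws v (sB+J) HS Hp (HA (sB+J)%nat ltac:(unfold sB; lia) Hs)) as HFb.
    assert (HJ0 : 0 < INR J) by (assert (0 < 18/gamma^2) by (apply Rdiv_lt_0_compat; lra); lra).
    assert (Hy1 : y (sB + J)%nat <= gamma^2 / 18).
    { apply Rmult_le_reg_r with (INR J). lra.
      assert (1 <= gamma^2/18 * INR J).
      { replace 1 with (gamma^2/18 * (18/gamma^2)) by (field; lra). apply Rmult_le_compat_l. apply Rlt_le, Rdiv_lt_0_compat; lra. lra. }
      lra. }
    unfold y in Hy1.
    assert (HE : EN n x eta v (sB + J)%nat / INR n <= 1 / (9 * eta)).
    { unfold c in Hy1. apply div_le. lra.
      replace (1 / (9*eta) * INR n) with ((gamma^2/18) / (gamma^2 * (eta/INR n) / 2)) by (field; repeat split; lra).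
      apply le_div. apply Rdiv_lt_0_compat; [apply Rmult_lt_0_compat|]; lra. lra. }
    assert (1 / (9 * eta) + 8 / 7 * (1 / (8 * eta)) * (6 / 100) < 1/(8*eta)).
    { replace (1 / (9 * eta) + 8 / 7 * (1 / (8 * eta)) * (6 / 100)) with ((1/9 + 6/700) / eta) by (field; lra).
      replace (1/(8*eta)) with ((1/8)/eta) by (field; lra). unfold Rdiv at 1 2. apply Rmult_lt_compat_r.
      apply Rinv_0_lt_compat; lra. lra. }
    lra.
  - assert (Hno' : forall j, (j < M)%nat -> exists i, (i < n)%nat /\ zz n x eta (sA + j)%nat i < 0).
    { intros j Hj. apply NNPP. intro Hc. apply Hno. exists j. split; auto. intros i Hi.
      destruct (Rle_dec 0 (zz n x eta (sA + j)%nat i)); auto. exfalso. apply Hc. exists i. split; auto. lra. }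
    assert (HWA0 : 0 < W sA) by (apply HWpos; unfold sA in *; lia).
    assert (Hamin : 0 < eta / INR n * gamma / 2) by (apply Rdiv_lt_0_compat; [apply Rmult_lt_0_compat|]; lra).
    destruct (T_phase h W sA M (W sA) (eta / INR n * gamma / 2) (eta / INR n / 2)) as (A & HA1 & HA2).
    + auto.
    + assert (eta / INR n * gamma <= eta / INR n) by (rewrite <- (Rmult_1_r (eta / INR n)) at 2; apply Rmult_le_compat_l; lra). lra.
    + pose proof (Hlam sA ltac:(unfold sA; lia)). unfold h in *. lra.
    + lra.
    + auto.
    + intros k Hk. destruct (Hno' k Hk) as [i [Hi Hzi]].
      pose proof (Hwin (sA+k)%nat ltac:(unfold sA in *; lia) ltac:(unfold sA in *; lia)) as [HF Hp].
      replace (sA + k + 1)%nat with (Datatypes.S (sA + k)) by lia.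
      split. auto. split. apply Hmon; unfold sA in *; lia.
      pose proof (T_step n x gamma eta ws v (sA+k) i HS Hp (HA (sA+k)%nat ltac:(lia) ltac:(unfold sA in *; lia)) HF Hi Hzi) as [T1 T2].
      exists (eta / INR n * dot (x i) ws / 2). specialize (Ha i Hi). specialize (Hab i Hi).
      assert (dot (x i) ws <= 1) by nra.
      split. split.
      * unfold Rdiv. apply Rmult_le_compat_r. lra. apply Rmult_le_compat_l; lra.
      * unfold Rdiv. apply Rmult_le_compat_r. lra. rewrite <- (Rmult_1_r (eta * / INR n)) at 2. apply Rmult_le_compat_l. 
        assert (0 < eta * / INR n) by (apply Rmult_lt_0_compat; [lra| apply Rinv_0_lt_compat; lra]). lra. lra.
      * unfold h, W. split; auto.
    + apply HWpos; unfold sA in *; lia.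
    +
      assert (HA3 : eta * (37/20) <= A).
      { eapply Rle_trans; [|exact HA1].
        replace (INR M * (eta / INR n * gamma / 2)) with (eta / 2 * (INR M * gamma / INR n)) by (field; lra).
        assert (37/10 <= INR M * gamma / INR n).
        { apply le_div. lra. apply Rmult_le_reg_r with (/gamma). apply Rinv_0_lt_compat; lra.
          replace (INR M * gamma * / gamma) with (INR M) by (field; lra).
          replace (37 / 10 * INR n * / gamma) with (37/10 * INR n / gamma) by (unfold Rdiv; ring). lra. }
        nra. }
      assert (Hmx : eta / INR n / 2 <= eta / 2).
      { assert (1 <= INR n) by (replace 1 with (INR 1) by reflexivity; apply le_INR; lia).
        assert (Eq : eta = eta / INR n * INR n) by (field; lra). nra. }
      assert (HAm : A * A - eta / 2 * A <= A * A - eta / INR n / 2 * A) by nra.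
      assert (W sA * W sA <= (eta * (1 + 7/160)) * (eta * (1 + 7/160))) by nra.
      nra.
Qed.


Lemma min_exists : forall (P : nat -> Prop), (exists s, P s) -> exists s, P s /\ forall k, (k < s)%nat -> ~ P k.
Proof. intros P [s Hs].
  assert (H : forall N, forall s, (s <= N)%nat -> P s -> exists s', P s' /\ forall k, (k < s')%nat -> ~ P k).
  { induction N; intros s0 Hs0 HP.
    - exists s0. split; auto. intros k Hk. lia.
    - destruct (classic (exists k, (k < s0)%nat /\ P k)) as [[k [Hk HPk]]|Hno].
      + apply (IHN k). lia. auto.
      + exists s0. split; auto. intros k Hk HPk. apply Hno. eauto. }
  apply (H s s); auto.
Qed.

Lemma last_witness : forall (P : nat -> Prop) N, P 0%nat -> (0 < N)%nat ->
  exists s1, (s1 < N)%nat /\ P s1 /\ forall s, (s1 < s)%nat -> (s < N)%nat -> ~ P s.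
Proof. intros P N H0 HN. induction N. lia.
  destruct (classic (P N)) as [HPN|HPN].
  - exists N. split. lia. split; auto. intros. lia.
  - destruct N. contradiction.
    destruct IHN as [s1 [H1 [H2 H3]]]. lia.
    exists s1. split. lia. split; auto. intros s Hs Hs'.
    destruct (Nat.eq_dec s (S N)) as [->|Hne]. auto. apply H3; lia.
Qed.

Lemma W0_F : forall n x gamma eta ws v s, Setting n x gamma eta ws v ->
  lambda eta gamma <= hat n x eta ws s -> dot (gd n x eta s) v = 0 -> F n x (gd n x eta s) <= 1/(8*eta).
Proof. intros n x gamma eta ws v s HS Hh HW.
  pose proof (S_basic _ _ _ _ _ _ HS) as (Hn & He & Hen & Hab & Hdec & _).
  pose proof HS as (Hn0 & _ & Ha & _ & _ & _ & Hg & Hg1 & Hne & Hel).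
  pose proof (lam_facts eta gamma He Hg) as (L1 & L2 & L3).
  assert (Hl0 : 0 <= lambda eta gamma) by (apply Rmult_le_reg_l with gamma; lra).
  apply (F_le_if_all n x gamma eta); auto.
  intros i Hi. rewrite Hdec. rewrite HW. unfold hat in Hh. specialize (Ha i Hi). nra.
Qed.

Lemma cs2 : forall u y, dot u y * dot u y <= dot u u * dot y y.
Proof. intros [a b] [c d]. unfold dot; simpl. pose proof (pow2_ge_0 (a*d - b*c)). nra. Qed.

Lemma vnorm_neg : forall v, vnorm (vscale (-1) v) = vnorm v.
Proof. intros [a b]. unfold vnorm, dot, vscale; simpl. f_equal. ring. Qed.

Lemma dot_neg : forall u v, dot u (vscale (-1) v) = - dot u v.
Proof. intros [a b] [c d]. unfold dot, vscale; simpl. ring. Qed.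

Lemma Rabs_le_between : forall a b, Rabs a <= b -> - b <= a <= b.
Proof. intros a b H. destruct (Rcase_abs a). rewrite Rabs_left in H by auto. lra. rewrite Rabs_right in H by auto. lra. Qed.


Theorem lemma7 (n : nat) (x : nat -> vec2) (gamma eta : R) (wstar vstar : vec2) (t : nat) :
  (0 < n)%nat ->
  (forall i, (i < n)%nat -> vnorm (x i) <= 1) ->
  (exists w : vec2, forall i, (i < n)%nat -> dot w (x i) > 0) ->
  max_margin n x gamma wstar ->
  vnorm vstar = 1 ->
  dot vstar wstar = 0 ->
  0 < eta ->
  eta >= eta0 n gamma ->
  lt_tau n x eta t ->
  exists s : nat,
    (t <= s)%nat /\
    INR s <= INR t + 1 + 4 * INR n / gamma + 96 / gamma ^ 2 /\
    (is_tau n x eta s \/ oscillation n x eta gamma wstar vstar s).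
Proof.
  intros Hn Hx Hsep Hmm Hv Hvw Heta Heta0 Hlt.
  destruct Hmm as (Hws & Hge & [i0 [Hi0 Heq]] & Hmax).
  assert (Hx' : forall i, (i < n)%nat -> dot (x i) (x i) <= 1) by (intros; apply vnorm_le1; auto).
  assert (Hg1 : gamma <= 1).
  { pose proof (cs2 wstar (x i0)). rewrite (vnorm1 _ Hws), Heq in H. specialize (Hx' i0 Hi0).
    assert (0 <= dot (x i0) (x i0)) by (destruct (x i0); unfold dot; simpl; nra). nra. }
  assert (Hg : 0 < gamma).
  { destruct Hsep as [w Hw].
    set (r := sqrt (dot w w)).
    assert (Hw0 : 0 < dot w w).
    { specialize (Hw 0%nat Hn). pose proof (cs2 w (x 0%nat)). 
      assert (0 <= dot (x 0%nat) (x 0%nat)) by (destruct (x 0%nat); unfold dot; simpl; nra).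
      destruct (Rle_dec (dot w w) 0). assert (dot w w = 0) by (destruct w; unfold dot in *; simpl in *; nra). nra. lra. }
    assert (Hr : 0 < r) by (apply sqrt_lt_R0; auto).
    assert (Hrr : r * r = dot w w) by (apply sqrt_sqrt; lra).
    destruct (Hmax (vscale (/ r) w)) as [i [Hi Hle]].
    { unfold vnorm. replace (dot (vscale (/ r) w) (vscale (/ r) w)) with 1. apply sqrt_1.
      destruct w as [a b]. unfold dot, vscale in *; simpl in *.
      replace (/ r * a * (/ r * a) + / r * b * (/ r * b)) with ((a*a+b*b) / (r*r)) by (field; lra). rewrite Hrr. field. lra. }
    rewrite dot_vscale in Hle. specialize (Hw i Hi). 
    assert (0 < / r * dot w (x i)) by (apply Rmult_lt_0_compat; [apply Rinv_0_lt_compat|]; lra). lra. }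
  assert (HeN : INR n <= eta) by (unfold eta0 in Heta0; pose proof (Rmax_l (INR n) (32 / gamma ^ 2 * ln (256 / gamma ^ 2))); lra).
  assert (HeL : 32 / gamma ^ 2 * ln (256 / gamma ^ 2) <= eta) by (unfold eta0 in Heta0; pose proof (Rmax_r (INR n) (32 / gamma ^ 2 * ln (256 / gamma ^ 2))); lra).
  assert (HS : Setting n x gamma eta wstar vstar).
  { repeat split; auto. intros i Hi. rewrite dot_comm. auto. }
  assert (HS' : Setting n x gamma eta wstar (vscale (-1) vstar)).
  { repeat split; auto. intros i Hi. rewrite dot_comm. auto. rewrite vnorm_neg; auto.
    rewrite dot_comm, dot_neg, dot_comm, Hvw. ring. }
  pose proof (S_basic _ _ _ _ _ _ HS) as (HnR & He1 & Hen & Hab & Hdec & He160).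
  assert (Hg2 : 0 < gamma^2) by nra.
  assert (Hg2' : 1 <= 1/gamma^2) by (apply le_div; nra).
  assert (Hng : 0 <= 4 * INR n / gamma) by (apply Rlt_le, Rdiv_lt_0_compat; lra).
  set (K := 1 + 4 * INR n / gamma + 96 / gamma ^ 2).
  destruct (nat_above (K - 1)) as [L [HL1 HL2]]. unfold K. assert (0 < 96/gamma^2) by (apply Rdiv_lt_0_compat; lra). lra.
  set (Sn := (t + L)%nat).
  assert (HSn : INR Sn <= INR t + K) by (unfold Sn; rewrite plus_INR; lra).
  set (th := 1/(8*eta)).
  destruct (classic (exists s, (t <= s)%nat /\ (s <= Sn)%nat /\ F n x (gd n x eta s) <= th)) as [[s [Hs1 [Hs2 Hs3]]]|Hno].
  - destruct (min_exists (fun s => F n x (gd n x eta s) <= th)) as [s' [Hs' Hmin]]. eauto.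
    assert (Hts' : (t < s')%nat).
    { destruct (Nat.lt_ge_cases t s') as [|Hc]; auto. specialize (Hlt s' Hc). unfold th in Hs'. lra. }
    assert (Hss : (s' <= s)%nat).
    { destruct (Nat.le_gt_cases s' s) as [|Hc]; auto. exfalso. apply (Hmin s Hc Hs3). }
    exists s'. split. lia. split.
    { assert (INR s' <= INR Sn) by (apply le_INR; lia). unfold K in HSn. lra. }
    left. split. auto. intros k Hk. specialize (Hmin k Hk). unfold th in Hmin. lra.
  - assert (HF : forall s, (s <= Sn)%nat -> F n x (gd n x eta s) > th).
    { intros s Hs. destruct (Nat.le_gt_cases s t). apply Hlt; auto.
      destruct (Rle_dec (F n x (gd n x eta s)) th). exfalso. apply Hno. exists s. repeat split; auto; lia. lra. }
    set (W := fun s => dot (gd n x eta s) vstar).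
    assert (HL0 : (1 <= L)%nat).
    { assert (0 < INR L). { assert (0 < 96/gamma^2) by (apply Rdiv_lt_0_compat; lra). unfold K in HL1. lra. }
      destruct L. simpl in H. lra. lia. }
    assert (HWne : forall s, (1 <= s)%nat -> (s <= Sn)%nat -> W s <> 0).
    { intros s H1 H2 H0. pose proof (W0_F n x gamma eta wstar vstar s HS (hat_ge_lam n x gamma eta wstar vstar s HS H1) H0).
      specialize (HF s H2). unfold th in HF. lra. }
    destruct (last_witness (fun s => W s * W (S s) <= 0) Sn) as [s1 [Hs1 [HP1 Hlast]]].
    { unfold W. simpl gd. rewrite dot_zero. lra. }
    { unfold Sn. lia. }
    destruct (classic ((t <= s1)%nat /\ (1 <= s1)%nat)) as [[Ht1 Ht2]|Hnt].
    + exists s1. split. auto. split.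
      { assert (INR s1 <= INR Sn) by (apply le_INR; lia). unfold K in HSn. lra. }
      right. unfold oscillation. split.
      { pose proof (hat_ge_lam n x gamma eta wstar vstar s1 HS Ht2). unfold hat in H. lra. }
      split. apply HF; lia. split. apply HF; lia.
      pose proof (HWne s1 Ht2 ltac:(lia)). pose proof (HWne (S s1) ltac:(lia) ltac:(lia)).
      unfold W in *. cbv beta in HP1.
      assert (dot (gd n x eta (S s1)) vstar * dot (gd n x eta s1) vstar <> 0) by (apply Rmult_integral_contrapositive; auto).
      nra.
    + exfalso. set (u0 := S s1).
      assert (Hu0t : (u0 <= t + 1)%nat) by (unfold u0; destruct (Nat.le_gt_cases t s1); [destruct s1; lia|lia]).
      assert (HWu0 : Rabs (W u0) <= eta).
      { pose proof (tl_step_bounds n x gamma eta wstar vstar s1 HS). fold (W (S s1)) (W s1) in H. unfold u0.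
        apply Rabs_le. apply Rabs_le_between in H. destruct (Rle_dec 0 (W (S s1))).
        - cbv beta in HP1. destruct (Rle_dec (W s1) 0). lra. 
          assert (W (S s1) <= 0) by nra. lra.
        - cbv beta in HP1. destruct (Rle_dec 0 (W s1)). lra. nra. }
      assert (Hsign : forall s, (u0 <= s)%nat -> (s < Sn)%nat -> 0 < W s * W (S s)).
      { intros s H1 H2. destruct (Rle_dec (W s * W (S s)) 0). exfalso. apply (Hlast s). unfold u0 in H1; lia. auto. auto. lra. }
      assert (Hbud : INR u0 + 37/10 * INR n / gamma + 66 / gamma^2 + 3 <= INR Sn).
      { assert (INR u0 <= INR t + 1) by (replace (INR t + 1) with (INR (t+1)) by (rewrite plus_INR; simpl; ring); apply le_INR; auto).
        unfold Sn. rewrite plus_INR. unfold K in HL1.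
        assert (37/10 * INR n / gamma <= 4 * INR n / gamma).
        { unfold Rdiv. apply Rmult_le_compat_r. left; apply Rinv_0_lt_compat; lra. nra. }
        assert (66/gamma^2 + 4 <= 96/gamma^2).
        { replace (96/gamma^2) with (66/gamma^2 + 30 * (1/gamma^2)) by (field; lra). lra. }
        lra. }
      assert (Hu01 : (1 <= u0)%nat) by (unfold u0; lia).
      assert (HWu0ne : W u0 <> 0) by (apply HWne; unfold u0; lia).
      destruct (Rlt_dec 0 (W u0)) as [Hpos|Hneg].
      * apply (core n x gamma eta wstar vstar u0 Sn HS Hu01); auto.
        -- intros s H1 H2. split. apply HF; auto.
           induction s. lia. destruct (Nat.eq_dec (S s) u0) as [E|E]. rewrite <- E in Hpos. auto.
           assert (0 < W s) by (apply IHs; lia). pose proof (Hsign s ltac:(lia) ltac:(lia)). unfold W in *. nra.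
        -- apply Rabs_le_between in HWu0. unfold W in HWu0. lra.
      * apply (core n x gamma eta wstar (vscale (-1) vstar) u0 Sn HS' Hu01); auto.
        -- intros s H1 H2. split. apply HF; auto. rewrite dot_neg.
           induction s. lia. destruct (Nat.eq_dec (S s) u0) as [E|E]. rewrite E. unfold W in *. lra.
           assert (0 < - dot (gd n x eta s) vstar) by (apply IHs; lia). pose proof (Hsign s ltac:(lia) ltac:(lia)). unfold W in *. nra.
        -- rewrite dot_neg. apply Rabs_le_between in HWu0. unfold W in HWu0. lra.
Qed.
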